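(* Let $\Phi:\{0,1\}^\omega\to\{0,1\}^\omega$ be a computable function and let $b$ be a $\Phi$-martingale. Suppose that for every $\sigma\in\{0,1\}^{<\omega}$ the limit $$b'(\sigma)=\lim_{n\to\infty}\sum_{\tau\in\{0,1\}^n} b(\tau)\,\frac{\mu([\sigma]\cap\Phi^{-1}([\tau]))}{\mu([\sigma])}$$ exists. Then $b'$ is a martingale, i.e. $b'(\sigma0)+b'(\sigma1)=2b'(\sigma)$ for all $\sigma$. Furthermore, if $b$ satisfies the saving property, then $\Phi^{-1}(\mathrm{Succ}(b))\subseteq \mathrm{Succ}(b')$.
   Context: $\mu$ is the uniform (fair-coin) measure on $\{0,1\}^\omega$ and $[\tau]$ is the set of sequences extending $\tau$. For a computable (total) $\Phi:\{0,1\}^\omega\to\{0,1\}^\omega$, a $\Phi$-martingale is a function $b:\{0,1\}^{<\omega}\to\mathbb{R}_{\ge0}$ with $b(\tau)\mu(\Phi^{-1}[\tau])=b(\tau0)\mu(\Phi^{-1}[\tau0])+b(\tau1)\mu(\Phi^{-1}[\tau1])$ for all $\tau$. $\mathrm{Succ}(b)=\{Y:\limsup_n b(Y\upharpoonright n)=\infty\}$ (for a function on strings in general). $b$ has the saving property if for every $k\in\omega$ and every $Y\in\mathrm{Succ}(b)$ there is a finite proper prefix $\tau$ of $Y$ such that $b(\rho)\ge k$ for every string $\rho$ extending $\tau$. *)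

(* Defs.v *)
From Stdlib Require Import Reals Lra List Classical ClassicalEpsilon.
Import ListNotations.
Open Scope R_scope.

Definition cantor := nat -> bool.
Definition bstring := list bool.

Definition prefix_of (s : bstring) (X : cantor) : Prop :=
  forall i, (i < length s)%nat -> nth i s false = X i.

Definition cyl (s : bstring) : cantor -> Prop := fun X => prefix_of s X.

Definition sprefix (s t : bstring) : Prop := exists u, t = s ++ u.

Definition restr (X : cantor) (n : nat) : bstring := map X (seq 0 n).

Definition preimage (Phi : cantor -> cantor) (A : cantor -> Prop) : cantor -> Prop :=
  fun X => A (Phi X).

Definition inter (A B : cantor -> Prop) : cantor -> Prop := fun X => A X /\ B X.

Fixpoint strings (n : nat) : list bstring :=
  match n with
  | O => [ [] ]
  | S m => flat_map (fun s => [s ++ [false]; s ++ [true]]) (strings m)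
  end.

Definition sumR {A} (l : list A) (F : A -> R) : R :=
  fold_right (fun a acc => F a + acc) 0 l.

(** Supremum of a set of reals (0 if it is empty or unbounded above). *)
Definition Rsup (E : R -> Prop) : R :=
  match excluded_middle_informative (bound E /\ exists x, E x) with
  | left H => proj1_sig (completeness E (proj1 H) (proj2 H))
  | right _ => 0
  end.

Fixpoint psum (f : nat -> bstring) (n : nat) : R :=
  match n with
  | O => 0
  | S m => psum f m + (/ 2) ^ (length (f m))
  end.

(** Uniform (fair-coin) measure: Lebesgue outer measure on Cantor space,
    mu(A) = inf { sum_i 2^{-|f i|} : A subset of union_i [f i] }. *)
Definition covers (f : nat -> bstring) (A : cantor -> Prop) : Prop :=
  forall X, A X -> exists i, prefix_of (f i) X.

Definition mu (A : cantor -> Prop) : R :=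
  - Rsup (fun r => exists f : nat -> bstring,
             covers f A /\
             bound (fun s => exists n, s = psum f n) /\
             r = - Rsup (fun s => exists n, s = psum f n)).

(** Phi is a total functional given by a Turing-functional-style string map
    phi : every phi(X|m) is a prefix of Phi(X), and these approximations
    have unbounded length (totality). *)
Definition represents (phi : bstring -> bstring) (Phi : cantor -> cantor) : Prop :=
  (forall X m, prefix_of (phi (restr X m)) (Phi X)) /\
  (forall X n, exists m, (n <= length (phi (restr X m)))%nat).

Definition Phi_martingale (Phi : cantor -> cantor) (b : bstring -> R) : Prop :=
  (forall t, 0 <= b t) /\
  forall t,
    b t * mu (preimage Phi (cyl t)) =
    b (t ++ [false]) * mu (preimage Phi (cyl (t ++ [false]))) +
    b (t ++ [true]) * mu (preimage Phi (cyl (t ++ [true]))).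

(** Succ(b) = { Y : limsup_n b(Y|n) = infinity }, i.e. b(Y|n) is unbounded. *)
Definition Succ (b : bstring -> R) (Y : cantor) : Prop :=
  forall M : R, exists n, M < b (restr Y n).

Definition saving (b : bstring -> R) : Prop :=
  forall (k : nat) (Y : cantor), Succ b Y ->
    exists m : nat, forall rho, sprefix (restr Y m) rho -> INR k <= b rho.

Definition approx (Phi : cantor -> cantor) (b : bstring -> R) (s : bstring) (n : nat) : R :=
  sumR (strings n)
    (fun t => b t * (mu (inter (cyl s) (preimage Phi (cyl t))) / mu (cyl s))).

(* Main.v *)
Require Import Defs.
From Stdlib Require Import Reals Lra Lia List Classical ClassicalEpsilon.
Import ListNotations.
Open Scope R_scope.

Definition w (u : bstring) : R := (/2) ^ length u.
Definition zeros n : bstring := repeat false n.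
Definition wo (o : option bstring) : R := match o with Some u => w u | None => 0 end.
Definition mix (g : nat -> option bstring) (K : nat) (i : nat) : bstring :=
  match g i with Some u => u | None => zeros (S (i + K)) end.
Fixpoint psumo (g : nat -> option bstring) (n : nat) : R :=
  match n with O => 0 | S m => psumo g m + wo (g m) end.

Lemma w_pos u : 0 < w u.
Proof. unfold w. apply pow_lt. lra. Qed.

Lemma wo_nonneg o : 0 <= wo o.
Proof. destruct o; simpl; [left; apply w_pos| lra]. Qed.

Lemma psum_nonneg f n : 0 <= psum f n.
Proof. induction n; simpl. lra. pose proof (w_pos (f n)). unfold w in *. lra. Qed.

Lemma psum_mono f n m : (n <= m)%nat -> psum f n <= psum f m.
Proof. induction 1. lra. simpl. pose proof (w_pos (f m)). unfold w in *. lra. Qed.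

Lemma psumo_mono g n m : (n <= m)%nat -> psumo g n <= psumo g m.
Proof. induction 1. lra. simpl. pose proof (wo_nonneg (g m)). lra. Qed.

Lemma half_pow_pos K : 0 < (/2)^K.
Proof. apply pow_lt. lra. Qed.

Lemma psum_mix_strong g K n :
  psum (mix g K) n <= psumo g n + (/2)^K * (1 - (/2)^n).
Proof.
  induction n; simpl. lra.
  destruct (g n) as [u|] eqn:E; simpl.
  - replace (mix g K n) with u by (unfold mix; now rewrite E).
    pose proof (half_pow_pos K). pose proof (half_pow_pos n).
    unfold w. set (a := (/2)^K) in *. set (c := (/2)^n) in *. nra.
  - replace (mix g K n) with (zeros (S (n + K))) by (unfold mix; now rewrite E).
    unfold zeros. rewrite repeat_length. simpl.
    rewrite Nat.add_comm, pow_add.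
    pose proof (half_pow_pos K). pose proof (half_pow_pos n).
    set (a := (/2)^K) in *. set (c := (/2)^n) in *. nra.
Qed.

Lemma psum_mix g K n : psum (mix g K) n <= psumo g n + (/2)^K.
Proof.
  pose proof (psum_mix_strong g K n). pose proof (half_pow_pos K).
  pose proof (half_pow_pos n). nra.
Qed.

Lemma Rsup_lub E : bound E -> (exists x, E x) -> is_lub E (Rsup E).
Proof.
  intros Hb He. unfold Rsup.
  destruct (excluded_middle_informative _) as [H|H].
  - destruct (completeness E (proj1 H) (proj2 H)) as [x Hx]. simpl. exact Hx.
  - exfalso. apply H. auto.
Qed.

Definition single (u : bstring) : nat -> option bstring :=
  fun i => match i with O => Some u | _ => None end.

Lemma psumo_single u n : psumo (single u) n <= w u.
Proof.
  induction n; simpl. pose proof (w_pos u); lra.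
  destruct n; simpl. lra. simpl in IHn. lra.
Qed.

Definition Eset (A : cantor -> Prop) : R -> Prop :=
  fun r => exists f : nat -> bstring,
             covers f A /\
             bound (fun s => exists n, s = psum f n) /\
             r = - Rsup (fun s => exists n, s = psum f n).

Lemma Eset_props A : bound (Eset A) /\ exists x, Eset A x.
Proof.
  split.
  - exists 0. intros r [f [Hc [Hb Hr]]].
    pose proof (Rsup_lub _ Hb (ex_intro _ (psum f 0) (ex_intro _ 0%nat eq_refl))) as [H1 H2].
    assert (psum f 0 <= Rsup (fun s => exists n, s = psum f n)) by (apply H1; eauto).
    simpl in H. lra.
  - set (f := mix (single []) 0).
    exists (- Rsup (fun s => exists n, s = psum f n)). exists f. split; [|split; auto].
    + intros X _. exists 0%nat. unfold f, mix; simpl. intros i Hi; simpl in Hi; lia.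
    + exists 2. intros r [n ->]. pose proof (psum_mix (single []) 0 n).
      pose proof (psumo_single [] n). unfold w in *. simpl in *. fold f in H. lra.
Qed.

Lemma mu_le A f B : covers f A -> (forall n, psum f n <= B) -> mu A <= B.
Proof.
  intros Hc HB.
  assert (Hb : bound (fun s => exists n, s = psum f n)).
  { exists B. intros r [n ->]. auto. }
  pose proof (Rsup_lub _ Hb (ex_intro _ (psum f 0) (ex_intro _ 0%nat eq_refl))) as [H1 H2].
  assert (Rsup (fun s => exists n, s = psum f n) <= B).
  { apply H2. intros r [n ->]. auto. }
  destruct (Eset_props A) as [Eb Ene].
  destruct (Rsup_lub _ Eb Ene) as [E1 E2].
  assert (- Rsup (fun s => exists n, s = psum f n) <= Rsup (Eset A)).
  { apply E1. exists f. auto. }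
  unfold mu. fold (Eset A). lra.
Qed.

Lemma mu_approx A eps : 0 < eps ->
  exists f, covers f A /\ forall n, psum f n <= mu A + eps.
Proof.
  intros He. apply NNPP. intros Hn.
  destruct (Eset_props A) as [Eb Ene].
  destruct (Rsup_lub _ Eb Ene) as [E1 E2].
  assert (Rsup (Eset A) <= Rsup (Eset A) - eps).
  { apply E2. intros r [f [Hc [Hb Hr]]].
    destruct (Rle_or_lt r (Rsup (Eset A) - eps)) as [H|H]; auto.
    exfalso. apply Hn. exists f. split; auto. intros n.
    pose proof (Rsup_lub _ Hb (ex_intro _ (psum f 0) (ex_intro _ 0%nat eq_refl))) as [H1 H2].
    assert (psum f n <= Rsup (fun s => exists n, s = psum f n)) by (apply H1; eauto).
    unfold mu. fold (Eset A). lra. }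
  lra.
Qed.
Lemma eps_le x y : (forall eps, 0 < eps -> x <= y + eps) -> x <= y.
Proof.
  intros H. destruct (Rle_or_lt x y) as [|Hl]; auto.
  specialize (H ((x - y)/2) ltac:(lra)). lra.
Qed.

Lemma small_pow eps : 0 < eps -> exists K, (/2)^K < eps.
Proof.
  intros He. destruct (pow_lt_1_zero (/2) ltac:(rewrite Rabs_pos_eq; lra) eps He) as [N HN].
  exists N. specialize (HN N (le_n N)). rewrite Rabs_pos_eq in HN; auto.
  left; apply half_pow_pos.
Qed.

Lemma prefix_nil X : prefix_of [] X.
Proof. intros i Hi. simpl in Hi. lia. Qed.

Lemma sprefix_nth u v i d : sprefix u v -> (i < length u)%nat -> nth i u d = nth i v d.
Proof. intros [z ->] Hi. rewrite app_nth1; auto. Qed.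

Lemma sprefix_len u v : sprefix u v -> (length u <= length v)%nat.
Proof. intros [z ->]. rewrite length_app. lia. Qed.

Lemma sprefix_prefix u v X : sprefix u v -> prefix_of v X -> prefix_of u X.
Proof.
  intros Hs Hv i Hi. rewrite (sprefix_nth u v i false Hs Hi). apply Hv.
  pose proof (sprefix_len _ _ Hs). lia.
Qed.

Lemma sprefix_trans u v z : sprefix u v -> sprefix v z -> sprefix u z.
Proof. intros [a ->] [b ->]. exists (a ++ b). now rewrite app_assoc. Qed.

Lemma prefix_compat u v X : prefix_of u X -> prefix_of v X ->
  (length u <= length v)%nat -> sprefix u v.
Proof.
  intros Hu Hv Hl. exists (skipn (length u) v).
  rewrite <- (firstn_skipn (length u) v) at 1. f_equal.
  apply nth_ext with (d := false) (d' := false).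
  - rewrite length_firstn. lia.
  - intros i Hi. rewrite length_firstn in Hi. rewrite nth_firstn.
    destruct (Nat.ltb_spec i (length u)); [|lia].
    rewrite Hu by lia. rewrite Hv by lia. reflexivity.
Qed.

Lemma prefix_app1 s b X : prefix_of (s ++ [b]) X <-> prefix_of s X /\ X (length s) = b.
Proof.
  split.
  - intros H. split.
    + intros i Hi. rewrite <- H by (rewrite length_app; simpl; lia). rewrite app_nth1; auto.
    + rewrite <- H by (rewrite length_app; simpl; lia). rewrite app_nth2 by lia.
      rewrite Nat.sub_diag. reflexivity.
  - intros [H1 H2] i Hi. rewrite length_app in Hi. simpl in Hi.
    destruct (Nat.ltb_spec i (length s)).
    + rewrite app_nth1; auto.
    + assert (i = length s) by lia. subst. rewrite app_nth2 by lia.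
      rewrite Nat.sub_diag. simpl. auto.
Qed.

Lemma prefix_split s X : prefix_of s X ->
  prefix_of (s ++ [false]) X \/ prefix_of (s ++ [true]) X.
Proof.
  intros H. destruct (X (length s)) eqn:E; [right|left]; apply prefix_app1; auto.
Qed.

Lemma sprefix01 s v : sprefix (s ++ [false]) v -> sprefix (s ++ [true]) v -> False.
Proof.
  intros [a Ha] [b Hb]. rewrite Ha in Hb. rewrite <- !app_assoc in Hb.
  apply app_inv_head in Hb. simpl in Hb. discriminate.
Qed.

Lemma restr_length X n : length (restr X n) = n.
Proof. unfold restr. rewrite length_map, length_seq. auto. Qed.

Lemma restr_nth X n i : (i < n)%nat -> nth i (restr X n) false = X i.
Proof.
  intros Hi. unfold restr. rewrite nth_indep with (d' := X 0%nat)
    by (rewrite length_map, length_seq; auto).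
  rewrite map_nth, seq_nth; auto.
Qed.

Lemma prefix_restr X n : prefix_of (restr X n) X.
Proof. intros i Hi. rewrite restr_length in Hi. apply restr_nth; auto. Qed.

Lemma restr_eq u Z n : length u = n -> (forall i, (i < n)%nat -> nth i u false = Z i) ->
  u = restr Z n.
Proof.
  intros Hl H. apply nth_ext with (d := false) (d' := false).
  - rewrite restr_length; auto.
  - intros i Hi. rewrite restr_nth by lia. apply H. lia.
Qed.

Lemma prefix_restr_eq s Y : prefix_of s Y -> restr Y (length s) = s.
Proof. intros H. symmetry. apply restr_eq; auto. Qed.

Lemma mu_nonneg A : 0 <= mu A.
Proof.
  apply Rnot_lt_le. intros H.
  destruct (mu_approx A (- mu A / 2) ltac:(lra)) as [f [_ Hf]].
  specialize (Hf 0%nat). simpl in Hf. lra.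
Qed.

Lemma mu_mono (A B : cantor -> Prop) : (forall X, A X -> B X) -> mu A <= mu B.
Proof.
  intros H. apply eps_le. intros eps He.
  destruct (mu_approx B eps He) as [f [Hc Hf]].
  apply (mu_le A f); auto. intros X HX. apply Hc; auto.
Qed.

Lemma psumo_none n : psumo (fun _ => None) n = 0.
Proof. induction n; simpl; auto. rewrite IHn. simpl. lra. Qed.

Lemma mu_empty (A : cantor -> Prop) : (forall X, ~ A X) -> mu A = 0.
Proof.
  intros H. apply Rle_antisym; [|apply mu_nonneg].
  apply eps_le. intros eps He. destruct (small_pow eps He) as [K HK].
  apply (mu_le A (mix (fun _ => None) K)).
  - intros X HX. exfalso. apply (H X HX).
  - intros n. pose proof (psum_mix (fun _ => None) K n). rewrite psumo_none in H0. lra.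
Qed.

Definition interleave (f g : nat -> bstring) (i : nat) : bstring :=
  if Nat.even i then f (Nat.div2 i) else g (Nat.div2 i).

Lemma psum_interleave f g n : psum (interleave f g) (2 * n) = psum f n + psum g n.
Proof.
  induction n. simpl. lra.
  replace (2 * S n)%nat with (S (2 * n + 1)) by lia.
  change (psum (interleave f g) (S (2 * n + 1))) with
    (psum (interleave f g) (2 * n + 1) + (/2) ^ length (interleave f g (2 * n + 1))).
  replace (2 * n + 1)%nat with (S (2 * n)) at 1 by lia.
  change (psum (interleave f g) (S (2 * n))) with
    (psum (interleave f g) (2 * n) + (/2) ^ length (interleave f g (2 * n))).
  rewrite IHn. unfold interleave.
  rewrite Nat.even_odd, Nat.even_even, Nat.div2_odd', Nat.div2_double. simpl. lra.
Qed.

Lemma mu_union (A B : cantor -> Prop) : mu (fun X => A X \/ B X) <= mu A + mu B.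
Proof.
  apply eps_le. intros eps He.
  destruct (mu_approx A (eps/2) ltac:(lra)) as [f [Hf1 Hf2]].
  destruct (mu_approx B (eps/2) ltac:(lra)) as [g [Hg1 Hg2]].
  apply (mu_le _ (interleave f g)).
  - intros X [HX|HX].
    + destruct (Hf1 X HX) as [i Hi]. exists (2 * i)%nat. unfold interleave.
      rewrite Nat.even_even, Nat.div2_double. auto.
    + destruct (Hg1 X HX) as [i Hi]. exists (2 * i + 1)%nat. unfold interleave.
      rewrite Nat.even_odd, Nat.div2_odd'. auto.
  - intros n. apply Rle_trans with (psum (interleave f g) (2 * n)).
    + apply psum_mono. lia.
    + rewrite psum_interleave. specialize (Hf2 n). specialize (Hg2 n). lra.
Qed.

Lemma mu_list {T} (l : list T) (A : T -> cantor -> Prop) :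
  mu (fun X => exists t, In t l /\ A t X) <= sumR l (fun t => mu (A t)).
Proof.
  induction l as [|a l IH]; simpl.
  - rewrite mu_empty. lra. intros X [t [[] _]].
  - apply Rle_trans with (mu (fun X => A a X \/ (exists t, In t l /\ A t X))).
    + apply mu_mono. intros X [t [[<-|Ht] H]]; [left|right]; eauto.
    + pose proof (mu_union (A a) (fun X => exists t, In t l /\ A t X)). lra.
Qed.
Lemma sumR_app {T} (l1 l2 : list T) F : sumR (l1 ++ l2) F = sumR l1 F + sumR l2 F.
Proof. induction l1; simpl. lra. rewrite IHl1. lra. Qed.

Lemma sumR_w_in u L : In u L -> w u <= sumR L w.
Proof.
  induction L as [|a L IH]; simpl. tauto.
  assert (0 <= sumR L w).
  { clear. induction L; simpl. lra. pose proof (w_pos a). lra. }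
  intros [->|H']. lra. pose proof (w_pos a). specialize (IH H'). lra.
Qed.

Lemma sumR_filter2 (p q : bstring -> bool) L :
  (forall u, p u = true -> q u = false) ->
  sumR (filter p L) w + sumR (filter q L) w <= sumR L w.
Proof.
  intros H. induction L as [|a L IH]; simpl. lra.
  pose proof (w_pos a).
  destruct (p a) eqn:Ep; [rewrite (H a Ep)|destruct (q a)]; simpl; lra.
Qed.

Lemma w_app1 s b : w (s ++ [b]) = w s / 2.
Proof. unfold w. rewrite length_app. simpl. rewrite Nat.add_1_r. simpl. lra. Qed.

Lemma w_le u s : (length u <= length s)%nat -> w s <= w u.
Proof.
  intros H. unfold w. replace (length s) with (length u + (length s - length u))%nat by lia.
  rewrite pow_add. pose proof (half_pow_pos (length u)).
  assert ((/2) ^ (length s - length u) <= 1).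
  { rewrite <- (pow1 (length s - length u)). apply pow_incr. lra. }
  nra.
Qed.

Definition extpt (s : bstring) : cantor := fun i => nth i s false.
Lemma prefix_ext s : prefix_of s (extpt s).
Proof. intros i Hi. reflexivity. Qed.

Definition pb (s : bstring) (bb : bool) (u : bstring) : bool :=
  if excluded_middle_informative (sprefix (s ++ [bb]) u) then true else false.

Lemma fin_cover_aux d : forall s L, (forall u, In u L -> (length u <= length s + d)%nat) ->
  (forall X, prefix_of s X -> exists u, In u L /\ prefix_of u X) -> w s <= sumR L w.
Proof.
  induction d as [|d IH]; intros s L Hl Hc.
  - destruct (Hc (extpt s) (prefix_ext s)) as [u [Hin Hu]].
    assert (sprefix u s).
    { apply (prefix_compat u s (extpt s)); auto. apply prefix_ext. specialize (Hl u Hin). lia. }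
    apply Rle_trans with (w u). apply w_le. apply sprefix_len; auto.
    apply sumR_w_in; auto.
  - destruct (classic (exists u, In u L /\ sprefix u s)) as [[u [Hin Hus]]|Hno].
    + apply Rle_trans with (w u). apply w_le. apply sprefix_len; auto.
      apply sumR_w_in; auto.
    + assert (Hb : forall bb, w (s ++ [bb]) <= sumR (filter (pb s bb) L) w).
      { intros bb. apply IH.
        - intros u Hu. apply filter_In in Hu as [Hu Hp]. specialize (Hl u Hu).
          rewrite length_app. simpl. lia.
        - intros X HX. apply prefix_app1 in HX as [HX1 HX2].
          destruct (Hc X HX1) as [u [Hin Hu]]. exists u. split; auto.
          apply filter_In. split; auto. unfold pb.
          destruct (excluded_middle_informative _) as [|Hn]; auto. exfalso.
          destruct (Nat.le_gt_cases (length u) (length s)).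
          + apply Hno. exists u. split; auto. apply (prefix_compat u s X); auto.
          + apply Hn. apply (prefix_compat _ u X); auto.
            apply prefix_app1; auto. rewrite length_app; simpl; lia. }
      pose proof (sumR_filter2 (pb s false) (pb s true) L) as H2.
      pose proof (Hb false). pose proof (Hb true).
      rewrite w_app1 in *.
      assert (w s / 2 + w s / 2 <= sumR L w); [|lra].
      eapply Rle_trans; [|apply H2]. lra.
      intros u. unfold pb. destruct (excluded_middle_informative _) as [Ha|]; [|discriminate].
      destruct (excluded_middle_informative _) as [Hb'|]; auto.
      exfalso. apply (sprefix01 s u); auto.
Qed.

Lemma fin_cover s L :
  (forall X, prefix_of s X -> exists u, In u L /\ prefix_of u X) -> w s <= sumR L w.
Proof.
  assert (exists d, forall u, In u L -> (length u <= length s + d)%nat) as [d Hd].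
  { induction L as [|a L [d Hd]]. exists 0%nat. simpl; tauto.
    exists (d + length a)%nat. intros u [->|Hu]. lia. specialize (Hd u Hu). lia. }
  apply fin_cover_aux with d; auto.
Qed.

Lemma psum_list f N : sumR (map f (seq 0 N)) w = psum f N.
Proof.
  induction N. reflexivity.
  rewrite seq_S, map_app, sumR_app, IHN. simpl. unfold w. lra.
Qed.

Section Compact.
Variable f : nat -> bstring.
Definition good (u : bstring) : Prop :=
  forall N, exists Y, prefix_of u Y /\ forall i, (i < N)%nat -> ~ prefix_of (f i) Y.

Lemma good_step u : good u -> good (u ++ [false]) \/ good (u ++ [true]).
Proof.
  intros Hg. apply NNPP. intros H. apply not_or_and in H as [H0 H1].
  apply not_all_ex_not in H0 as [N0 H0]. apply not_all_ex_not in H1 as [N1 H1].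
  destruct (Hg (Nat.max N0 N1)) as [Y [HY1 HY2]].
  destruct (prefix_split u Y HY1) as [HY|HY].
  - apply H0. exists Y. split; auto. intros i Hi. apply HY2. lia.
  - apply H1. exists Y. split; auto. intros i Hi. apply HY2. lia.
Qed.

Definition nxt (u : bstring) : bstring :=
  if excluded_middle_informative (good (u ++ [false])) then u ++ [false] else u ++ [true].

Lemma nxt_good u : good u -> good (nxt u).
Proof.
  intros H. unfold nxt. destruct (excluded_middle_informative _); auto.
  destruct (good_step u H); tauto.
Qed.

Lemma nxt_ext u : sprefix u (nxt u) /\ length (nxt u) = S (length u).
Proof.
  unfold nxt. destruct (excluded_middle_informative _); split;
  try (eexists; reflexivity); rewrite length_app; simpl; lia.
Qed.

Definition P (s : bstring) (k : nat) : bstring := Nat.iter k nxt s.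

Lemma P_good s k : good s -> good (P s k).
Proof. intros H. induction k; simpl; auto. apply nxt_good; auto. Qed.

Lemma P_len s k : length (P s k) = (length s + k)%nat.
Proof. unfold P. induction k; simpl. lia. rewrite (proj2 (nxt_ext _)). lia. Qed.

Lemma P_chain s k j : sprefix (P s k) (P s (k + j)).
Proof.
  induction j. rewrite Nat.add_0_r. exists []. now rewrite app_nil_r.
  rewrite Nat.add_succ_r. eapply sprefix_trans; [apply IHj|].
  apply (proj1 (nxt_ext _)).
Qed.

Lemma P_nth s k k' i : (i < length (P s k))%nat -> (i < length (P s k'))%nat ->
  nth i (P s k) false = nth i (P s k') false.
Proof.
  intros H1 H2. destruct (Nat.le_ge_cases k k').
  - replace k' with (k + (k' - k))%nat by lia. apply sprefix_nth; auto. apply P_chain.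
  - replace k with (k' + (k - k'))%nat by lia. symmetry. apply sprefix_nth; auto. apply P_chain.
Qed.

Lemma cyl_cover_bound s : covers f (cyl s) -> exists n, w s <= psum f n.
Proof.
  intros Hc. apply NNPP. intros Hn.
  assert (Hs : good s).
  { intros N. apply NNPP. intros H. apply Hn. exists N. rewrite <- psum_list.
    apply fin_cover. intros X HX.
    assert (exists i, (i < N)%nat /\ prefix_of (f i) X) as [i [Hi HXi]].
    { apply NNPP. intros H'. apply H. exists X. split; auto.
      intros i Hi HXi. apply H'. eauto. }
    exists (f i). split; auto. apply in_map. apply in_seq. lia. }
  set (X := fun i => nth i (P s (S i)) false).
  assert (HP : forall k, prefix_of (P s k) X).
  { intros k i Hi. unfold X. apply P_nth; auto. rewrite P_len. lia. }
  destruct (Hc X (HP 0%nat)) as [i Hi].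
  destruct (P_good s (length (f i)) Hs (S i)) as [Y [HY1 HY2]].
  apply (HY2 i (Nat.lt_succ_diag_r i)). intros j Hj.
  rewrite (Hi j Hj). rewrite <- (HP (length (f i)) j) by (rewrite P_len; lia).
  apply HY1. rewrite P_len; lia.
Qed.
End Compact.

Lemma mu_cyl s : mu (cyl s) = w s.
Proof.
  apply Rle_antisym.
  - apply eps_le. intros eps He. destruct (small_pow eps He) as [K HK].
    apply (mu_le _ (mix (single s) K)).
    + intros X HX. exists 0%nat. exact HX.
    + intros n. pose proof (psum_mix (single s) K n). pose proof (psumo_single s n). lra.
  - apply eps_le. intros eps He. destruct (mu_approx (cyl s) eps He) as [f [Hc Hf]].
    destruct (cyl_cover_bound f s Hc) as [n Hn]. specialize (Hf n). lra.
Qed.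
Definition gsplit (f : nat -> bstring) (s : bstring) (bb : bool) (i : nat) : option bstring :=
  if excluded_middle_informative (sprefix (f i) s) then Some (s ++ [bb])
  else if excluded_middle_informative (sprefix (s ++ [bb]) (f i)) then Some (f i) else None.

Lemma gsplit_w f s i : wo (gsplit f s false i) + wo (gsplit f s true i) <= w (f i).
Proof.
  unfold gsplit. destruct (excluded_middle_informative _) as [H|H].
  - simpl. rewrite !w_app1. apply sprefix_len in H. pose proof (w_le _ _ H). lra.
  - destruct (excluded_middle_informative (sprefix (s ++ [false]) (f i))) as [H0|H0];
    destruct (excluded_middle_informative (sprefix (s ++ [true]) (f i))) as [H1|H1];
    simpl; try (pose proof (w_pos (f i)); lra).
    exfalso; eapply sprefix01; eauto.
Qed.

Lemma gsplit_psumo f s n : psumo (gsplit f s false) n + psumo (gsplit f s true) n <= psum f n.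
Proof.
  induction n; simpl. lra. pose proof (gsplit_w f s n). unfold w in H. lra.
Qed.

Lemma gsplit_cover f s bb K A : covers f (inter (cyl s) A) ->
  covers (mix (gsplit f s bb) K) (inter (cyl (s ++ [bb])) A).
Proof.
  intros Hc X [HX HA]. pose proof HX as HX'. apply prefix_app1 in HX' as [HXs HXb].
  destruct (Hc X (conj HXs HA)) as [i Hi]. exists i. unfold mix, gsplit.
  destruct (excluded_middle_informative _) as [H|H]; auto.
  destruct (excluded_middle_informative _) as [H'|H']; auto.
  exfalso. destruct (Nat.le_gt_cases (length (f i)) (length s)).
  - apply H. apply (prefix_compat _ _ X); auto.
  - apply H'. apply (prefix_compat _ _ X); auto. rewrite length_app; simpl; lia.
Qed.

Lemma mu_split s A : mu (inter (cyl s) A) =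
  mu (inter (cyl (s ++ [false])) A) + mu (inter (cyl (s ++ [true])) A).
Proof.
  apply Rle_antisym.
  - eapply Rle_trans; [|apply mu_union]. apply mu_mono.
    intros X [HX HA]. destruct (prefix_split s X HX); [left|right]; split; auto.
  - apply eps_le. intros eps He.
    destruct (mu_approx (inter (cyl s) A) (eps/2) ltac:(lra)) as [f [Hc Hf]].
    destruct (small_pow (eps/4) ltac:(lra)) as [K HK].
    set (T := mu (inter (cyl s) A)) in *.
    assert (Hnm : forall n m, psumo (gsplit f s false) n + psumo (gsplit f s true) m <= T + eps/2).
    { intros n m. pose proof (psumo_mono (gsplit f s false) n (Nat.max n m) ltac:(lia)).
      pose proof (psumo_mono (gsplit f s true) m (Nat.max n m) ltac:(lia)).
      pose proof (gsplit_psumo f s (Nat.max n m)). specialize (Hf (Nat.max n m)). lra. }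
    assert (H0 : forall m, mu (inter (cyl (s ++ [false])) A) <=
                  T + eps/2 - psumo (gsplit f s true) m + (/2)^K).
    { intros m. apply (mu_le _ (mix (gsplit f s false) K)). apply gsplit_cover; auto.
      intros n. pose proof (psum_mix (gsplit f s false) K n). specialize (Hnm n m). lra. }
    assert (mu (inter (cyl (s ++ [true])) A) <=
                  T + eps/2 - mu (inter (cyl (s ++ [false])) A) + (/2)^K + (/2)^K).
    { apply (mu_le _ (mix (gsplit f s true) K)). apply gsplit_cover; auto.
      intros n. pose proof (psum_mix (gsplit f s true) K n). specialize (H0 n). lra. }
    lra.
Qed.
Lemma sumR_plus {T} (l : list T) F G : sumR l F + sumR l G = sumR l (fun t => F t + G t).
Proof. induction l; simpl. lra. rewrite <- IHl. lra. Qed.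

Lemma sumR_scal {T} (l : list T) k F : sumR l (fun t => k * F t) = k * sumR l F.
Proof. induction l; simpl. lra. rewrite IHl. lra. Qed.

Lemma sumR_ext {T} (l : list T) F G : (forall t, In t l -> F t = G t) -> sumR l F = sumR l G.
Proof. induction l; simpl; intros H. auto. rewrite H, IHl; auto. Qed.

Lemma sumR_le {T} (l : list T) F G : (forall t, In t l -> F t <= G t) -> sumR l F <= sumR l G.
Proof. induction l; simpl; intros H. lra. pose proof (H a (or_introl eq_refl)).
  pose proof (IHl (fun t Ht => H t (or_intror Ht))). lra. Qed.

Lemma strings_len n u : In u (strings n) -> length u = n.
Proof.
  revert u; induction n; simpl; intros u H.
  - destruct H as [<-|[]]; auto.
  - apply in_flat_map in H as [v [Hv Hu]]. apply IHn in Hv.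
    destruct Hu as [<-|[<-|[]]]; rewrite length_app; simpl; lia.
Qed.

Lemma In_strings n u : length u = n -> In u (strings n).
Proof.
  revert u; induction n; simpl; intros u H.
  - destruct u; [auto|discriminate].
  - destruct (@exists_last _ u) as [v [a ->]]. intros ->; discriminate.
    rewrite length_app in H. simpl in H. apply in_flat_map. exists v. split.
    apply IHn; lia. destruct a; simpl; auto.
Qed.

Lemma Un_cv_ext u v l : (forall n, u n = v n) -> Un_cv u l -> Un_cv v l.
Proof.
  intros H Hu eps He. destruct (Hu eps He) as [N HN]. exists N. intros n Hn.
  rewrite <- H. auto.
Qed.

Lemma Un_cv_scal u l k : Un_cv u l -> Un_cv (fun n => k * u n) (k * l).
Proof.
  intros Hu eps He. destruct (Req_dec k 0) as [->|Hk].
  - exists 0%nat. intros n _. unfold R_dist. rewrite !Rmult_0_l, Rminus_0_r, Rabs_R0. auto.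
  - assert (Ha : 0 < Rabs k) by (apply Rabs_pos_lt; auto).
    destruct (Hu (eps / Rabs k) ltac:(apply Rdiv_lt_0_compat; auto)) as [N HN].
    exists N. intros n Hn. specialize (HN n Hn). unfold R_dist in *.
    replace (k * u n - k * l) with (k * (u n - l)) by ring. rewrite Rabs_mult.
    apply Rmult_lt_compat_l with (r := Rabs k) in HN; auto.
    replace (Rabs k * (eps / Rabs k)) with eps in HN by (field; lra). auto.
Qed.

Lemma lim_ge u l a N : Un_cv u l -> (forall n, (N <= n)%nat -> a <= u n) -> a <= l.
Proof.
  intros Hu H. apply Rnot_lt_le. intros Hl.
  destruct (Hu (a - l) ltac:(lra)) as [M HM].
  specialize (HM (Nat.max N M) ltac:(lia)). specialize (H (Nat.max N M) ltac:(lia)).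
  unfold R_dist in HM. rewrite Rabs_pos_eq in HM by lra. lra.
Qed.

Theorem lemmaL2
  (Phi : cantor -> cantor) (phi : bstring -> bstring)
  (Hphi : represents phi Phi)
  (b : bstring -> R) (Hb : Phi_martingale Phi b)
  (b' : bstring -> R)
  (Hlim : forall s : bstring, Un_cv (approx Phi b s) (b' s)) :
  (forall s : bstring, b' (s ++ [false]) + b' (s ++ [true]) = 2 * b' s) /\
  (saving b -> forall X : cantor, Succ b (Phi X) -> Succ b' X).
Proof.
  split.
  - intros s.
    assert (Heq : forall n, approx Phi b (s ++ [false]) n + approx Phi b (s ++ [true]) n
                            = 2 * approx Phi b s n).
    { intros n. unfold approx. rewrite sumR_plus, <- sumR_scal. apply sumR_ext.
      intros t _. rewrite !mu_cyl, !w_app1.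
      rewrite (mu_split s (preimage Phi (cyl t))).
      pose proof (w_pos s). field. lra. }
    apply (UL_sequence (fun n => approx Phi b (s ++ [false]) n + approx Phi b (s ++ [true]) n)).
    + apply CV_plus; apply Hlim.
    + apply (Un_cv_ext (fun n => 2 * approx Phi b s n)). intros n; auto.
      apply Un_cv_scal. apply Hlim.
  - intros Hsav X HS M.
    destruct (INR_archimed 1 M ltac:(lra)) as [k Hk]. rewrite Rmult_1_r in Hk.
    destruct (Hsav k (Phi X) HS) as [m Hm].
    destruct (proj2 Hphi X m) as [m' Hm'].
    set (sg := restr X m').
    exists m'. fold sg. apply Rlt_le_trans with (INR k); [lra|].
    apply (lim_ge (approx Phi b sg) _ _ m); [apply Hlim|].
    intros n Hn.
    assert (Hkey : forall Y t, prefix_of sg Y -> prefix_of t (Phi Y) -> length t = n ->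
                               INR k <= b t).
    { intros Y t HY Ht Hlt. apply Hm.
      assert (HrY : restr Y m' = sg).
      { pose proof (prefix_restr_eq sg Y HY). unfold sg in *. rewrite restr_length in H. auto. }
      pose proof (proj1 Hphi Y m') as H1. rewrite HrY in H1.
      pose proof (proj1 Hphi X m') as H2. fold sg in H2.
      apply (prefix_compat _ t (Phi Y)); auto.
      + intros i Hi. rewrite restr_length in Hi. rewrite restr_nth by auto.
        fold sg in Hm'. rewrite <- H1 by lia. symmetry. apply H2. lia.
      + rewrite restr_length. lia. }
    set (c := mu (cyl sg)).
    assert (Hc : 0 < c) by (unfold c; rewrite mu_cyl; apply w_pos).
    unfold approx. fold c.
    apply Rle_trans with
      (sumR (strings n) (fun t => INR k * (mu (inter (cyl sg) (preimage Phi (cyl t))) / c))).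
    + rewrite sumR_scal.
      assert (c <= sumR (strings n) (fun t => mu (inter (cyl sg) (preimage Phi (cyl t))) / c) * c).
      { replace (sumR (strings n) (fun t => mu (inter (cyl sg) (preimage Phi (cyl t))) / c) * c)
          with (sumR (strings n) (fun t => mu (inter (cyl sg) (preimage Phi (cyl t))))).
        2: { rewrite Rmult_comm, <- sumR_scal. apply sumR_ext. intros t _. field. lra. }
        eapply Rle_trans; [|apply (mu_list (strings n) (fun t => inter (cyl sg) (preimage Phi (cyl t))))].
        apply mu_mono. intros Y HY. exists (restr (Phi Y) n). split.
        apply In_strings, restr_length. split; auto. apply prefix_restr. }
      pose proof (pos_INR k).
      set (S := sumR _ _) in *.
      assert (1 <= S). { apply Rmult_le_reg_r with c; auto. lra. }
      nra.
    + apply sumR_le. intros t Ht. apply strings_len in Ht.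
      assert (Hnn : 0 <= mu (inter (cyl sg) (preimage Phi (cyl t))) / c).
      { unfold Rdiv. apply Rmult_le_pos. apply mu_nonneg. left; apply Rinv_0_lt_compat; auto. }
      destruct (classic (exists Y, inter (cyl sg) (preimage Phi (cyl t)) Y)) as [[Y [HY1 HY2]]|Hno].
      * apply Rmult_le_compat_r; auto. apply (Hkey Y t); auto.
      * rewrite mu_empty. unfold Rdiv. lra. intros Y HY. apply Hno; eauto.
Qed.
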